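(* In the setting described in the context, for every $t\ge0$: if $R_{t\infty}>0$ then $L_{t\infty}=\infty$, whereas if $L_{t\infty}<\infty$ then $R_{t\infty}=0$.
   Context: Let $(\Omega,\mathcal F,\mathbb P)$ be a probability space with a filtration $\{\mathcal F_t\}_{t\ge0}$ satisfying the usual conditions; (in)equalities between random variables hold a.s. A pricing kernel is an $\{\mathcal F_t\}$-adapted càdlàg semimartingale $\{\pi_t\}_{t\ge0}$ with (a) $\pi_t>0$, (b) $\mathbb E[\pi_t]<\infty$ for all $t\ge0$, (c) $\liminf_{t\to\infty}\mathbb E[\pi_t]=0$. Fix such a pricing kernel and set $P_{tT}=\pi_t^{-1}\mathbb E[\pi_T\mid\mathcal F_t]$ for $0\le t<T$. Define the exponential rate $R_{tT}=-(T-t)^{-1}\ln P_{tT}$ and the Libor rate $L_{tT}=(T-t)^{-1}(P_{tT}^{-1}-1)$. For a family $\{A_x\}_{x\in\mathbb R^+}$ of $\mathcal F_t$-measurable extended-real random variables, $\limsup_{x\to\infty}A_x:=\operatorname{ess\,inf}_{x}\operatorname{ess\,sup}_{y\ge x}A_y$, with essential supremum/infimum taken among $\mathcal F_t$-measurable random variables. The long exponential rate is $R_{t\infty}=\limsup_{T\to\infty}R_{tT}$ and the long Libor rate is $L_{t\infty}=\limsup_{T\to\infty}L_{tT}$. *)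

(* Defs.v *)
From HB Require Import structures.
From mathcomp Require Import all_boot all_order all_algebra.
From mathcomp Require Import all_classical all_reals all_analysis measurable_realfun.
Set Implicit Arguments. Unset Strict Implicit. Unset Printing Implicit Defensive.
Import Order.TTheory GRing.Theory Num.Theory.
Import numFieldNormedType.Exports.
Local Open Scope classical_set_scope.
Local Open Scope ring_scope.

Section Defs.
Context {R : realType} {d : measure_display} {T : measurableType d}.
Variable P : probability T R.

Definition Gmeasurable {d' : measure_display} {U : measurableType d'}
  (G : set (set T)) (X : T -> U) : Prop :=
  forall B : set U, measurable B -> G (X @^-1` B).

Definition filtration_usual (F : R -> set (set T)) : Prop :=
  [/\ (forall t, 0 <= t -> sigma_algebra setT (F t)),
      (forall t, 0 <= t -> F t `<=` measurable),
      (forall s t, 0 <= s -> s <= t -> F s `<=` F t),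
      (forall N, P.-negligible N -> F 0 N) &
      (forall t A, 0 <= t -> (forall s, t < s -> F s A) -> F t A)].

Definition adapted (F : R -> set (set T)) (X : R -> T -> R) : Prop :=
  forall t, 0 <= t -> Gmeasurable (F t) (X t).

Definition cadlag_path (f : R -> R) : Prop :=
  (forall s, 0 <= s -> f x @[x --> s^'+] --> f s) /\
  (forall s, 0 < s -> exists l : R, f x @[x --> s^'-] --> l).

Definition finite_variation_path (f : R -> R) : Prop :=
  forall u, 0 <= u -> exists C : R, forall (n : nat) (s : nat -> R),
    s 0%N = 0 -> s n = u -> (forall i, (i < n)%N -> s i <= s i.+1) ->
    \sum_(i < n) `|f (s i.+1) - f (s i)| <= C.

Definition is_cond_exp (G : set (set T)) (X Y : T -> R) : Prop :=
  [/\ Gmeasurable G Y, P.-integrable setT (EFin \o Y) &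
      forall A, G A -> (\int[P]_(x in A) (Y x)%:E = \int[P]_(x in A) (X x)%:E)%E].

Definition martingale (F : R -> set (set T)) (M : R -> T -> R) : Prop :=
  [/\ adapted F M,
      (forall t, 0 <= t -> P.-integrable setT (EFin \o M t)) &
      (forall s u A, 0 <= s -> s <= u -> F s A ->
         (\int[P]_(x in A) (M u x)%:E = \int[P]_(x in A) (M s x)%:E)%E)].

Definition stopping_time (F : R -> set (set T)) (tau : T -> \bar R) : Prop :=
  (forall w, (0 <= tau w)%E) /\
  (forall t, 0 <= t -> F t [set w | (tau w <= t%:E)%E]).

Definition stopped (M : R -> T -> R) (tau : T -> \bar R) : R -> T -> R :=
  fun t w => M (fine (Order.min t%:E (tau w))) w.

Definition local_martingale (F : R -> set (set T)) (M : R -> T -> R) : Prop :=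
  exists taus : nat -> T -> \bar R,
    [/\ (forall n, stopping_time F (taus n)),
        (forall n w, (taus n w <= taus n.+1 w)%E),
        {ae P, forall w, forall r : R, exists n, (r%:E < taus n w)%E} &
        (forall n, martingale F (stopped M (taus n)))].

Definition semimartingale (F : R -> set (set T)) (X : R -> T -> R) : Prop :=
  exists M A : R -> T -> R,
    [/\ adapted F M /\ adapted F A,
        (forall w, cadlag_path (M ^~ w) /\ cadlag_path (A ^~ w)),
        (forall w, finite_variation_path (A ^~ w) /\ M 0 w = 0 /\ A 0 w = 0),
        local_martingale F M &
        {ae P, forall w, forall t, 0 <= t -> X t w = X 0 w + M t w + A t w}].

Definition pricing_kernel (F : R -> set (set T)) (pi : R -> T -> R) : Prop :=
  [/\ adapted F pi /\ (forall w, cadlag_path (pi ^~ w)),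
      semimartingale F pi,
      (forall t, 0 <= t -> {ae P, forall w, 0 < pi t w}),
      (forall t, 0 <= t -> P.-integrable setT (EFin \o pi t)) &
      (* liminf_{t -> oo} E[pi_t] = 0 *)
      ereal_sup [set ereal_inf [set (\int[P]_x (pi t x)%:E)%E | t in [set t | M <= t]]
                | M in [set M : R | 0 <= M]] = 0%E].

Definition is_ess_sup (G : set (set T)) {I : Type} (J : set I)
  (A : I -> T -> \bar R) (Z : T -> \bar R) : Prop :=
  [/\ Gmeasurable G Z,
      (forall y, J y -> {ae P, forall w, (A y w <= Z w)%E}) &
      (forall Z', Gmeasurable G Z' ->
         (forall y, J y -> {ae P, forall w, (A y w <= Z' w)%E}) ->
         {ae P, forall w, (Z w <= Z' w)%E})].

Definition is_ess_inf (G : set (set T)) {I : Type} (J : set I)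
  (A : I -> T -> \bar R) (Z : T -> \bar R) : Prop :=
  [/\ Gmeasurable G Z,
      (forall y, J y -> {ae P, forall w, (Z w <= A y w)%E}) &
      (forall Z', Gmeasurable G Z' ->
         (forall y, J y -> {ae P, forall w, (Z' w <= A y w)%E}) ->
         {ae P, forall w, (Z' w <= Z w)%E})].

Definition is_ess_limsup (G : set (set T)) (D : set R)
  (A : R -> T -> \bar R) (Z : T -> \bar R) : Prop :=
  exists S : R -> T -> \bar R,
    (forall x, 0 <= x -> is_ess_sup G [set y | D y /\ x <= y] A (S x)) /\
    is_ess_inf G [set x | 0 <= x] S Z.

End Defs.

(** bond price P_{tT} = pi_t^{-1} E[pi_T | F_t], given a version E_tT of the
    conditional expectation *)
Definition bond {R : realType} {T : Type} (pi : R -> T -> R)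
  (E : R -> R -> T -> R) (t U : R) : T -> R :=
  fun w => (pi t w)^-1 * E t U w.

Definition exp_rate {R : realType} {T : Type} (pi : R -> T -> R)
  (E : R -> R -> T -> R) (t U : R) : T -> R :=
  fun w => - (U - t)^-1 * ln (bond pi E t U w).

Definition libor_rate {R : realType} {T : Type} (pi : R -> T -> R)
  (E : R -> R -> T -> R) (t U : R) : T -> R :=
  fun w => (U - t)^-1 * ((bond pi E t U w)^-1 - 1).

(* Main.v *)
Require Import Defs.
From HB Require Import structures.
From mathcomp Require Import all_boot all_order all_algebra.
From mathcomp Require Import all_classical all_reals all_analysis measurable_realfun.
From mathcomp Require Import ring lra.
Import Order.TTheory GRing.Theory Num.Theory Num.Def.
Import archimedean.Num.Theory archimedean.Num.Def.
Local Open Scope classical_set_scope.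
Local Open Scope ring_scope.
Lemma key_real (R : realType) (tau a Nn b : R) : 0 < a -> 0 < tau ->
  4 * Nn <= tau * a ^+ 2 -> tau^-1 * (b^-1 - 1) < Nn -> - tau^-1 * ln b <= a.
Proof.
move=> a0 t0 hN hb.
have [b0|b0] := leP b 0.
  by rewrite ln0 // mulr0 ltW.
have h1 : b^-1 < 1 + tau * Nn.
  move: hb; rewrite -(ltr_pM2l t0) mulrA mulfV ?gt_eqF // mul1r => h; lra.
have h2 : 1 + tau * Nn <= expR (tau * a).
  have -> : tau * a = tau * a / 2 + tau * a / 2 by field.
  rewrite expRD.
  have e := expR_ge1Dx (tau * a / 2).
  have p : 0 <= 1 + tau * a / 2 by have := mulr_gt0 t0 a0; lra.
  apply: (le_trans _ (ler_pM p p e e)).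
  have : tau * (4 * Nn) <= tau * (tau * a ^+ 2) by rewrite ler_pM2l.
  have := mulr_gt0 t0 a0; rewrite expr2; nra.
have h3 : - ln b < tau * a.
  rewrite -lnV ?posrE // -[X in _ < X](expRK).
  rewrite ltr_ln ?posrE ?invr_gt0 ?expR_gt0 //; exact: lt_le_trans h1 h2.
rewrite mulNr -mulrN -(ler_pM2l t0) mulrA mulfV ?gt_eqF // mul1r ltW //.
Qed.
Section GM.
Context {R : realType} {d : measure_display} {T : measurableType d}.

Lemma sigmaT (G : set (set T)) : sigma_algebra setT G -> G setT.
Proof. by case=> G0 GC _; rewrite -(setD0 setT); apply: GC. Qed.

Lemma Gmeas_cst (G : set (set T)) (c : \bar R) : sigma_algebra setT G ->
  Gmeasurable G (fun _ : T => c).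
Proof.
move=> sG B _; have [Bc|Bc] := pselect (B c).
  by rewrite preimage_cst ifT ?inE //; apply: sigmaT.
by rewrite preimage_cst ifF //; [case: sG | apply/negbTE/negP; rewrite inE].
Qed.

Lemma Gmeas_if (G : set (set T)) (Y : T -> \bar R) (p : \bar R -> bool)
  (u v : \bar R) : sigma_algebra setT G -> measurable [set e | p e] ->
  Gmeasurable G Y -> Gmeasurable G (fun w => if p (Y w) then u else v).
Proof.
move=> sG mp mY B _.
have hC := mY _ mp.
have [G0 GC _] := sG.
have [Bu|Bu] := pselect (B u); have [Bv|Bv] := pselect (B v).
- have -> : (fun w => if p (Y w) then u else v) @^-1` B = setT.
    by apply/seteqP; split => w //= _; case: ifP.
  exact: sigmaT.
- have -> : (fun w => if p (Y w) then u else v) @^-1` B = Y @^-1` [set e | p e].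
    by apply/seteqP; split => w /=; case: ifP.
  exact: hC.
- have -> : (fun w => if p (Y w) then u else v) @^-1` B = setT `\` Y @^-1` [set e | p e].
    by apply/seteqP; split => w /=; case: ifP => //= _ [].
  exact: GC.
- have -> : (fun w => if p (Y w) then u else v) @^-1` B = set0.
    by apply/seteqP; split => w //=; case: ifP.
  exact: G0.
Qed.

Lemma meas_lt (r : \bar R) : measurable [set e : \bar R | (e < r)%E].
Proof.
have := @emeasurable_itv R `]-oo, r[; congr measurable.
Qed.

Lemma meas_gt (r : \bar R) : measurable [set e : \bar R | (r < e)%E].
Proof.
have := @emeasurable_itv R `]r, +oo[; congr measurable.
by apply/seteqP; split => x /=; rewrite in_itv /= andbT.
Qed.

End GM.

Section PartA.
Context {R : realType} {d : measure_display} {T : measurableType d}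
  (P : probability T R) (G : set (set T)) (pi : R -> T -> R)
  (E : R -> R -> T -> R) (t : R).
Hypothesis sG : sigma_algebra setT G.
Hypothesis t0 : 0 <= t.
Variables (SR SL : R -> T -> \bar R) (Rinf Linf : T -> \bar R).
Hypothesis hSR : forall x : R, 0 <= x -> is_ess_sup P G [set y | (t < y)%R /\ (x <= y)%R]
  (fun U w => (exp_rate pi E t U w)%:E) (SR x).
Hypothesis hSL : forall x : R, 0 <= x -> is_ess_sup P G [set y | (t < y)%R /\ (x <= y)%R]
  (fun U w => (libor_rate pi E t U w)%:E) (SL x).
Hypothesis hRi : is_ess_inf P G [set x | 0 <= x] SR Rinf.
Hypothesis hLi : is_ess_inf P G [set x | 0 <= x] SL Linf.

Lemma stepA1 (x : R) (m N : nat) : 0 <= x ->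
  {ae P, forall w, ((m.+1%:R : R)^-1%:E < Rinf w)%E -> ((N%:R : R)%:E <= SL x w)%E}.
Proof.
move=> x0.
set k : R := m.+1%:R.
set a : R := k^-1.
set Nn : R := N%:R.
have k0 : 0 < k by rewrite /k ltr0Sn.
have a0 : 0 < a by rewrite /a invr_gt0.
have N0 : 0 <= Nn by rewrite /Nn ler0n.
set tau0 : R := 4 * Nn * k ^+ 2 + 1.
have tau00 : 0 < tau0.
  by rewrite /tau0 -mulrA; have := mulr_ge0 N0 (sqr_ge0 k); lra.
have tau0ge : 4 * Nn * k ^+ 2 <= tau0 by (rewrite /tau0; lra).
clearbody tau0.
set x' := x + t + tau0.
have x'0 : 0 <= x' by rewrite /x' !addr_ge0 // ltW.
have xx' : x <= x' by rewrite /x' -addrA lerDl addr_ge0 // ltW.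
have [mSL ubSL minSL] := hSL x x0.
have [mSL' ubSL' minSL'] := hSL x' x'0.
have [mSR' ubSR' minSR'] := hSR x' x'0.
have [mRi lbRi maxRi] := hRi.
have h3 : {ae P, forall w, (SL x' w <= SL x w)%E}.
  apply: (minSL' (SL x) mSL) => y [ty x'y]; apply: ubSL; split => //; exact: le_trans x'y.
pose Z' := fun w => if (SL x' w < Nn%:E)%E then a%:E else +oo%E.
have mZ' : Gmeasurable G Z' :=
  @Gmeas_if _ _ _ G (SL x') (fun e => (e < Nn%:E)%E) a%:E +oo%E sG (meas_lt _) mSL'.
have h1 : {ae P, forall w, (SR x' w <= Z' w)%E}.
  apply: (minSR' Z' mZ') => y [ty x'y].
  apply: filterS (ubSL' y (conj ty x'y)) => w hw.
  rewrite /Z'; case: ifP => h; last by rewrite leey.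
  rewrite lee_fin; apply: (@key_real _ _ _ Nn) => //.
  - by rewrite subr_gt0.
  - rewrite /a exprVn ler_pdivlMr ?exprn_gt0 //.
    apply: (le_trans tau0ge).
    rewrite lerBrDr; apply: le_trans x'y.
    rewrite /x' [x + t + tau0]addrC lerD2l ?lerDl ?lerDr.
  - by have := le_lt_trans hw h; rewrite lte_fin /libor_rate.
  - by have := le_lt_trans hw h; rewrite lte_fin /libor_rate.
have h2 : {ae P, forall w, (Rinf w <= SR x' w)%E} by exact: (lbRi x' x'0).
apply: (filterS3 _ _ h1 h2 h3) => w h1w h2w h3w ha.
apply: le_trans h3w.
move: h1w; rewrite /Z'; case: ifP => h hz; last by rewrite leNgt h.
have := lt_le_trans ha (le_trans h2w hz); by rewrite ltxx.
Qed.


Lemma stepA2 (m N : nat) :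
  {ae P, forall w, ((m.+1%:R : R)^-1%:E < Rinf w)%E -> ((N%:R : R)%:E <= Linf w)%E}.
Proof.
have [mRi _ _] := hRi.
have [_ _ maxLi] := hLi.
pose Z := fun w => if ((m.+1%:R : R)^-1%:E < Rinf w)%E then (N%:R : R)%:E else -oo%E.
have mZ : Gmeasurable G Z :=
  @Gmeas_if _ _ _ G Rinf (fun e => ((m.+1%:R : R)^-1%:E < e)%E) _ _ sG (meas_gt _) mRi.
have := maxLi Z mZ.
have lb : forall x : R, [set x | 0 <= x] x -> {ae P, forall w, (Z w <= SL x w)%E}.
  move=> x x0; apply: filterS (@stepA1 x m N x0) => w h.
  by rewrite /Z; case: ifP => hh; [exact: h|rewrite leNye].
move=> /(_ lb); apply: filterS => w; rewrite /Z.
by case: ifP => // hh h _.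
Qed.

Lemma partA : {ae P, forall w, (0 < Rinf w)%E -> Linf w = +oo%E}.
Proof.
have h : {ae P, forall w, forall m N : nat,
  ((m.+1%:R : R)^-1%:E < Rinf w)%E -> ((N%:R : R)%:E <= Linf w)%E}.
  apply: ae_foralln => m; apply: ae_foralln => N; exact: stepA2.
apply: filterS h => w h Ri0.
have [m hm] : exists m : nat, ((m.+1%:R : R)^-1%:E < Rinf w)%E.
  move: Ri0; case: (Rinf w) => [r||] //; last by exists 0%N; rewrite ltry.
  rewrite lte_fin => r0; exists (truncn r^-1); rewrite lte_fin invf_plt ?posrE //.
  exact: truncnS_gt.
move: (h m) => /(_ _ hm) {}h.
case: (Linf w) h => [l||] // h.
  by have := h (truncn l).+1; rewrite lee_fin leNgt truncnS_gt.
by have := h 0%N; rewrite leeNy_eq.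
Qed.

End PartA.

Section PartB.
Context {R : realType} {d : measure_display} {T : measurableType d}
  (P : probability T R) (G : set (set T)) (pi : R -> T -> R)
  (E : R -> R -> T -> R) (t : R).
Local Open Scope ereal_scope.

Lemma int_epos (D : set T) (f : T -> \bar R) : measurable D ->
  measurable_fun D f -> {ae P, forall w, D w -> 0 <= f w} ->
  \int[P]_(w in D) f w = \int[P]_(w in D) f^\+ w.
Proof.
move=> mD mf h; apply: ae_eq_integral => //; first exact: measurable_funepos.
apply: filterS h => w h Dw; rewrite funeposE max_l //; exact: h.
Qed.

Lemma ae_le_int (D : set T) (f g : T -> \bar R) : measurable D ->
  measurable_fun D f -> measurable_fun D g ->
  {ae P, forall w, D w -> 0 <= f w} -> {ae P, forall w, D w -> f w <= g w} ->
  \int[P]_(w in D) f w <= \int[P]_(w in D) g w.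
Proof.
move=> mD mf mg hf hfg.
have hg : {ae P, forall w, D w -> 0 <= g w}.
  by apply: filterS2 hf hfg => w h1 h2 Dw; apply: le_trans (h2 Dw); exact: h1.
rewrite (@int_epos D f mD mf hf) (@int_epos D g mD mg hg).
apply: (@ae_ge0_le_integral _ _ _ P D mD f^\+ g^\+).
- by move=> w _; exact: funepos_ge0.
- exact: measurable_funepos.
- by move=> w _; exact: funepos_ge0.
- exact: measurable_funepos.
apply: filterS hfg => w h Dw; rewrite !funeposE; apply: le_max2 => //; exact: h.
Qed.


Hypothesis sG : sigma_algebra setT G.
Hypothesis hGm : G `<=` measurable.
Hypothesis t0 : (0 <= t)%R.
Hypothesis hpos : forall s : R, (0 <= s)%R -> {ae P, forall w, (0 < pi s w)%R}.
Hypothesis hint : forall s : R, (0 <= s)%R -> P.-integrable setT (EFin \o pi s).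
Hypothesis hlim : ereal_sup [set ereal_inf [set (\int[P]_x (pi s x)%:E)%E | s in [set s | (M <= s)%R]]
                | M in [set M : R | (0 <= M)%R]] = 0%E.
Hypothesis hE : forall U : R, (t < U)%R -> is_cond_exp P G (pi U) (E t U).
Variable SR : R -> T -> \bar R.
Hypothesis hSR : forall x : R, (0 <= x)%R -> is_ess_sup P G [set y | (t < y)%R /\ (x <= y)%R]
  (fun U w => (exp_rate pi E t U w)%:E) (SR x).

Lemma mfS (f : T -> R) (D : set T) : measurable D ->
  P.-integrable setT (EFin \o f) -> measurable_fun D (EFin \o f).
Proof.
by move=> mD /integrableP[mf _]; apply: (measurable_funS measurableT) => //.
Qed.

Lemma stepB (x : R) : (0 <= x)%R -> {ae P, forall w, 0 <= SR x w}.
Proof.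
move=> x0.
have [mS ubS _] := hSR x x0.
set A := [set w | SR x w < 0].
have GA : G A := mS _ (meas_lt 0).
have mA : measurable A := hGm _ GA.
suff PA0 : P A = 0.
  exists A; split => // w /= /negP; by rewrite -ltNge.
have [//|PA0] := eqVneq (P A) 0.
exfalso.
set f := EFin \o pi t.
have hp := hpos t t0.
have mf : measurable_fun A f := @mfS (pi t) A mA (hint t t0).
set c := \int[P]_(w in A) f w.
have cpos : 0 < c.
  rewrite ltNge; apply/negP => c0.
  have i1 : \int[P]_(w in A) `|f w| = c.
    apply: ae_eq_integral => //; first exact: measurableT_comp.
    by apply: filterS hp => w hw _; rewrite /f /= ger0_norm // (ltW hw).
  have i0 : \int[P]_(w in A) `|f w| = 0.
    by apply/eqP; rewrite eq_le (integral_ge0 _ (fun w _ => abse_ge0 _)) andbT i1.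
  have := (ae_eq_integral_abs P mA mf).1 i0.
  move=> h0; have : {ae P, forall w, ~ A w}.
    apply: filterS2 h0 hp => w h1 h2 Aw; move: (h1 Aw); rewrite /f /= => -[] h3.
    by move: h2; rewrite h3 ltxx.
  move=> hn; apply/negP: PA0; rewrite negbK; apply/eqP/negligibleP => //.
  by apply: negligibleS hn => w Aw /= nA; exact: nA Aw.
set M0 : R := (x + t + 1)%R.
have M00 : (0 <= M0)%R by rewrite /M0 !addr_ge0.
have hs : forall s, (M0 <= s)%R -> c <= \int[P]_w (pi s w)%:E.
  move=> s M0s.
  have ts : (t < s)%R.
    apply: lt_le_trans M0s; rewrite /M0; lra.
  have xs : (x <= s)%R by apply: le_trans M0s; rewrite /M0 -addrA lerDl addr_ge0.
  have s0 : (0 <= s)%R by apply: le_trans xs.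
  have [_ iE cE] := hE s ts.
  have ub := ubS s (conj ts xs).
  have hpE : {ae P, forall w, A w -> f w <= (E t s w)%:E}.
    apply: filterS2 ub hp => w h1 h2 Aw.
    have : (exp_rate pi E t s w < 0)%R by rewrite -lte_fin; exact: le_lt_trans h1 Aw.
    rewrite /exp_rate mulNr oppr_lt0 pmulr_rgt0 ?invr_gt0 ?subr_gt0 // => hl.
    have hb : (1 < bond pi E t s w)%R.
      by rewrite ltNge; apply/negP => /ln_le0; rewrite leNgt hl.
    move: hb; rewrite /bond -(ltr_pM2l h2) mulr1 mulrA mulfV ?gt_eqF // mul1r => hb.
    by rewrite /f /= lee_fin ltW.
  have mfs : measurable_fun setT (EFin \o pi s) by case/integrableP: (hint s s0).
  have hps := hpos s s0.
  have hps' : {ae P, forall w, setT w -> 0 <= (EFin \o pi s) w}.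
    by apply: filterS hps => w h _; rewrite /= lee_fin ltW.
  apply: (@le_trans _ _ (\int[P]_(w in A) (E t s w)%:E)).
    apply: (@ae_le_int A f (EFin \o E t s) mA mf (@mfS (E t s) A mA iE)) => //.
    by apply: filterS hp => w h _; rewrite /f /= lee_fin ltW.
  rewrite (cE A GA).
  have hpsA : {ae P, forall w, A w -> 0 <= (EFin \o pi s) w}.
    by apply: filterS hps => w h _; rewrite /= lee_fin ltW.
  rewrite (@int_epos A _ mA (@mfS (pi s) A mA (hint s s0)) hpsA).
  rewrite (@int_epos setT _ measurableT mfs hps').
  apply: ge0_subset_integral => //.
  - exact: measurable_funepos.
have h : ereal_inf [set (\int[P]_x (pi s x)%:E)%E | s in [set s | (M0 <= s)%R]] <= 0.
  by rewrite -hlim; apply: ereal_sup_ubound; exists M0.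
have : c <= 0.
  apply: le_trans h; apply: le_ereal_inf_tmp => _ [s /= M0s <-]; exact: hs.
by rewrite leNgt cpos.
Qed.

End PartB.

Theorem proposition2 (R : realType) (d : measure_display) (T : measurableType d)
  (P : probability T R) (F : R -> set (set T)) (pi : R -> T -> R)
  (E : R -> R -> T -> R) (t : R) (Rinf Linf : T -> \bar R) :
  filtration_usual P F ->
  pricing_kernel P F pi ->
  (forall s U, 0 <= s -> s < U -> is_cond_exp P (F s) (pi U) (E s U)) ->
  0 <= t ->
  is_ess_limsup P (F t) [set U | t < U]
    (fun U w => (exp_rate pi E t U w)%:E) Rinf ->
  is_ess_limsup P (F t) [set U | t < U]
    (fun U w => (libor_rate pi E t U w)%:E) Linf ->
  (({ae P, forall w, (0 < Rinf w)%E}) -> {ae P, forall w, Linf w = +oo%E}) /\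
  (({ae P, forall w, (Linf w < +oo)%E}) -> {ae P, forall w, Rinf w = 0%E}).
Proof.
move=> [hsig hmeas _ _ _] [_ _ hpos hint hlim] hE t0 [SR [hSR hRi]] [SL [hSL hLi]].
have sG := hsig t t0.
have hGm := hmeas t t0.
have hA := @partA R d T P (F t) pi E t sG t0 SR SL Rinf Linf hSR hSL hRi hLi.
have hB : {ae P, forall w, (0 <= Rinf w)%E}.
  case: hRi => _ _ maxR; apply: (maxR (fun _ => 0%E)); first exact: Gmeas_cst.
  move=> x x0.
  exact: (@stepB R d T P (F t) pi E t hGm t0 hpos hint hlim
    (fun U tU => hE t U t0 tU) SR hSR x x0).
split.
- by move=> h; apply: filterS2 h hA => w h1 h2; exact: h2.
- move=> h; apply: filterS3 h hA hB => w hL hA' hB'.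
  apply/eqP; rewrite eq_le hB' andbT leNgt; apply/negP => h0.
  by move: hL; rewrite hA' // ltxx.
Qed.
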